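(* Let $g:(0,\infty)\to(0,\infty)$ be bounded, non-decreasing and such that $g(t)=t\,g(1/t)$ for all $t>0$, and let $M=\sup_{t>0}g(t)$. Then $g(t)\ge g(1)\min\{1,t\}$ for all $t>0$. Moreover, if $\mu_\sigma$ is a symmetric probability density on $\mathbb{R}$, then for every $a\in\mathbb{R}$ the quantity $Z(a)=\int_{\mathbb{R}}g(e^{wa})\mu_\sigma(w)dw$ satisfies $\frac{g(1)}{2}\le Z(a)\le M$.
   Context: In the paper $a=\partial_i\log\pi(x)$ and $Z(a)=Z_i(x)$ is the normalising constant of the $i$-th coordinate of the locally-balanced proposal. *)

(* Defs.v *)
From HB Require Import structures.
From mathcomp Require Import all_boot all_order all_algebra.
From mathcomp Require Import all_classical all_reals all_analysis.
Set Implicit Arguments. Unset Strict Implicit. Unset Printing Implicit Defensive.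
Import Order.TTheory GRing.Theory Num.Theory.
Local Open Scope classical_set_scope.
Local Open Scope ring_scope.

Definition sym_prob_density (R : realType) (mu : R -> R) : Prop :=
  [/\ (forall w, 0 <= mu w),
      measurable_fun setT mu,
      ((\int[@lebesgue_measure R]_(w in setT) (mu w)%:E)%E = 1%E)
    & (forall w, mu (- w) = mu w)].

(* Main.v *)
Require Import Defs.
From HB Require Import structures.
From mathcomp Require Import all_boot all_order all_algebra.
From mathcomp Require Import all_classical all_reals all_analysis.
From mathcomp Require Import measurable_realfun lra.
Import Order.TTheory GRing.Theory Num.Theory.
Local Open Scope classical_set_scope.
Local Open Scope ring_scope.

Lemma leb_refl (R : realType) (A : set R) : measurable A ->
  (@lebesgue_measure R) A = pushforward (@lebesgue_measure R) (-%R) A.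
Proof.
move=> mA.
unshelve refine (@lebesgue_measure_unique R
   (@pushforward _ _ (measurableTypeR R) (measurableTypeR R) R (@lebesgue_measure R) (-%R) : {measure set (measurableTypeR R) -> \bar R}) _ A mA).
  exact: oppr_measurable.
move=> X [[a b] _ <-] /=.
rewrite /pushforward.
have -> : (-%R) @^-1` `]a, b]%classic = `[- b, - a[%classic.
  apply/seteqP; split => x /=; rewrite !in_itv /= .
    by move=> /andP[h1 h2]; rewrite lerNl h2 ltrNr h1.
  by move=> /andP[h1 h2]; rewrite ltrNr h2 lerNl h1.
rewrite !lebesgue_measure_itv /= !lte_fin ltrN2.
case: ifP => // _; rewrite -!EFinD; congr EFin; rewrite opprK addrC; done.
Qed.

Lemma int_refl (R : realType) (f : R -> \bar R) :
  measurable_fun setT f -> (forall x, (0 <= f x)%E) ->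
  (\int[@lebesgue_measure R]_(x in setT) f x =
   \int[@lebesgue_measure R]_(x in setT) f (- x)%R)%E.
Proof.
move=> mf f0.
have mN : measurable_fun [set: measurableTypeR R] (-%R : measurableTypeR R -> measurableTypeR R).
  exact: oppr_measurable.
have := @ge0_integral_pushforward _ _ (measurableTypeR R) (measurableTypeR R) R (-%R) mN
  (@lebesgue_measure R) setT f measurableT mf (fun y _ => f0 y).
rewrite preimage_setT => <-.
apply: eq_measure_integral => A mA _.
exact: (@leb_refl R A mA).
Qed.

Lemma half_le (R : realType) (c : R) (x : \bar R) :
  (c%:E <= x + x)%E -> ((c / 2)%:E <= x)%E.
Proof.
case: x => [r||] //=.
- rewrite -EFinD !lee_fin => h.
  lra.
- by move=> _; rewrite leey.
Qed.

Theorem lemma8 (R : realType) (g : R -> R)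
  (gpos : forall t, 0 < t -> 0 < g t)
  (gbnd : exists B : R, forall t, 0 < t -> g t <= B)
  (gmono : forall s t, 0 < s -> s <= t -> g s <= g t)
  (gsym : forall t, 0 < t -> g t = t * g t^-1) :
  let M := sup [set g t | t in `]0, +oo[] in
  (forall t, 0 < t -> g 1 * Num.min 1 t <= g t) /\
  (forall mu : R -> R, sym_prob_density mu ->
     forall a : R,
       let Z := (\int[@lebesgue_measure R]_(w in setT) (g (expR (w * a)) * mu w)%:E)%E in
       ((g 1 / 2)%:E <= Z)%E /\ (Z <= M%:E)%E).
Proof.
move=> M.
have g1 : 0 < g 1 := gpos 1 ltr01.
split.
  move=> t t0.
  have [t1|t1] := (@real_leP _ 1 t (num_real _) (num_real _)).
    by rewrite mulr1; apply: gmono.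
  rewrite (gsym t t0) mulrC; apply: ler_wpM2l; first exact: ltW.
  apply: gmono => //; rewrite invf_ge1 //; exact: ltW.
move=> mu [mu0 mmu int1 musym] a Z.
pose h x := g (expR x).
have hnd : nondecreasing_fun h.
  move=> x y xy; apply: gmono; first exact: expR_gt0.
  by rewrite ler_expR.
have h0 x : 0 < h x by apply: gpos; exact: expR_gt0.
have mh : measurable_fun setT h by apply: nondecreasing_measurable.
pose F w := h (w * a) * mu w.
have mF : measurable_fun setT F.
  apply: measurable_funM => //.
  change (measurable_fun setT (h \o (fun x => x * a))).
  apply: measurableT_comp => //; exact: mulrr_measurable.
have F0 w : 0 <= F w by rewrite mulr_ge0 // ltW.
have hM x : h x <= M.
  apply: ub_le_sup.
    case: gbnd => B hB; exists B => _ [t /= t0 <-]; apply: hB.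
    by move: t0; rewrite in_itv /= andbT.
  by exists (expR x) => //=; rewrite in_itv /= andbT expR_gt0.
have M0 : 0 <= M by apply: le_trans (hM 0); exact: ltW.
have ZE : Z = (\int[@lebesgue_measure R]_(w in setT) (F w)%:E)%E by [].
have mFE : measurable_fun setT (fun w => (F w)%:E) by exact/measurable_EFinP.
have mmuE : measurable_fun setT (fun w => (mu w)%:E) by exact/measurable_EFinP.
have F0E : forall w, setT w -> (0 <= (F w)%:E)%E by move=> w _; rewrite lee_fin.
have mu0E : forall w, setT w -> (0 <= (mu w)%:E)%E by move=> w _; rewrite lee_fin.
split; last first.
  rewrite ZE.
  apply: (@le_trans _ _ (\int[@lebesgue_measure R]_(w in setT) (M%:E * (mu w)%:E))%E).
    have mMmu : measurable_fun setT (fun w => (M%:E * (mu w)%:E)%E).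
      exact: measurable_funeM.
    have Mmu0 : forall w, setT w -> (0 <= M%:E * (mu w)%:E)%E.
      by move=> w _; rewrite -EFinM lee_fin mulr_ge0.
    apply: ge0_le_integral => //.
    by move=> w _; rewrite -EFinM lee_fin ler_wpM2r.
  by rewrite ge0_integralZl_EFin // int1 mule1.
apply: half_le.
have mFN : measurable_fun setT (fun w : R => F (- w)).
  change (measurable_fun setT (F \o -%R)); apply: measurableT_comp => //; exact: oppr_measurable.
have mFNE : measurable_fun setT (fun w : R => (F (- w))%:E) by exact/measurable_EFinP.
have FN0E : forall w, setT w -> (0 <= (F (- w))%:E)%E by move=> w _; rewrite lee_fin.
have -> : (Z + Z = \int[@lebesgue_measure R]_(w in setT) ((F w)%:E + (F (- w))%:E))%E.
  rewrite ge0_integralD // ZE; congr (_ + _)%E.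
  exact: (@int_refl R (fun w => (F w)%:E) mFE (fun w => F0E w I)).
rewrite -[X in (X <= _)%E]mule1 -int1 -ge0_integralZl_EFin //; last exact: ltW.
have mMmu : measurable_fun setT (fun w => ((g 1)%:E * (mu w)%:E)%E).
  exact: measurable_funeM.
have Mmu0 : forall w, setT w -> (0 <= (g 1)%:E * (mu w)%:E)%E.
  by move=> w _; rewrite -EFinM lee_fin mulr_ge0 // ltW.
have mS : measurable_fun setT (fun w => ((F w)%:E + (F (- w))%:E)%E).
  exact: emeasurable_funD.
have S0 : forall w, setT w -> (0 <= (F w)%:E + (F (- w))%:E)%E.
  by move=> w _; rewrite adde_ge0 // lee_fin.
apply: ge0_le_integral => //.
move=> w _; rewrite -EFinM -EFinD lee_fin /F musym mulNr -mulrDl.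
apply: ler_wpM2r => //.
have hge x : 0 <= x -> g 1 <= h x.
  by move=> x0; apply: gmono => //; rewrite -expR0 ler_expR.
have [wa|wa] := leP 0 (w * a).
  have := hge _ wa; have := h0 (- (w * a)); lra.
have wa' : 0 <= - (w * a) by rewrite oppr_ge0 ltW.
have := hge _ wa'; have := h0 (w * a); lra.
Qed.
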